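(* Let $A$ be a commutative Noetherian ring and $I=\langle a_1,\dots,a_n\rangle\subset A$. Let $u\in A$ be such that its image in $A/I$ is a unit, and let $v\in A$ with $uv-1\in I$. Let $r$ be an even integer with $2\le r\le n$, let $B=A/\langle a_{r+1},\dots,a_n\rangle$, and write a bar for reduction modulo $\langle a_{r+1},\dots,a_n\rangle$. Assume the unimodular row $(\bar v,\bar a_2,-\bar a_1,\dots,\bar a_r,-\bar a_{r-1})$ can be completed to an invertible matrix over $B$. Then there exists $\alpha\in M_{n\times n}(A)$ such that (1) $\det(\alpha)-u\in I$, and (2) setting $(b_1,\dots,b_n)=(a_1,\dots,a_n)\alpha$, one has $I=\langle b_1,\dots,b_n\rangle$.
   Context: A row $(c_1,\dots,c_m)$ over $B$ is completable to an invertible matrix if it is the first row of a matrix in $\mathrm{GL}_m(B)$. *)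

(* Defs.v *)
From HB Require Import structures.
From mathcomp Require Import all_boot all_order all_algebra.
Set Implicit Arguments.
Unset Strict Implicit.
Unset Printing Implicit Defensive.
Import GRing.Theory.
Local Open Scope ring_scope.

Definition in_ideal_gen (A : comPzRingType) (k : nat) (g : 'I_k -> A)
    (P : pred 'I_k) (x : A) : Prop :=
  exists c : 'I_k -> A, x = \sum_(i < k | P i) c i * g i.

Definition is_ideal (A : comPzRingType) (S : A -> Prop) : Prop :=
  [/\ S 0, (forall x y, S x -> S y -> S (x + y)) & (forall c x, S x -> S (c * x))].

Definition noetherian (A : comPzRingType) : Prop :=
  forall S : A -> Prop, is_ideal S ->
    exists (k : nat) (g : 'I_k -> A), forall x, S x <-> in_ideal_gen g predT x.

(* the 1-based k-th entry a_k of a row a = (a_1,...,a_n) (0 if out of range) *)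
Definition entry1 (A : comPzRingType) (n : nat) (a : 'rV[A]_n) (k : nat) : A :=
  oapp (fun i : 'I_n => a 0 i) 0 (insub k.-1).

(* the row (v, a_2, -a_1, a_4, -a_3, ..., a_r, -a_{r-1}) of length r+1 *)
Definition special_row (R : comPzRingType) (n r : nat) (v : R) (a : 'rV[R]_n)
    : 'rV[R]_r.+1 :=
  \row_(j < r.+1) (if j == 0 :> nat then v
                   else if odd j then entry1 a j.+1 else - entry1 a j.-1).

Definition completable (B : comPzRingType) (m : nat) (w : 'rV[B]_m.+1) : Prop :=
  exists M N : 'M[B]_m.+1,
    [/\ row 0 M = w, M *m N = 1%:M & N *m M = 1%:M].

(* Main.v *)
Require Import Defs.
From HB Require Import structures.
From mathcomp Require Import all_boot all_order all_algebra.
From mathcomp Require Import ring.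
Import GRing.Theory.
Local Open Scope ring_scope.


Section Ideal.
Variables (R : comPzRingType) (m : nat) (g : 'I_m -> R) (P : pred 'I_m).
Local Notation ig := (in_ideal_gen g P).

Lemma ig0 : ig 0.
Proof. exists (fun=> 0); rewrite big1 // => i _; by rewrite mul0r. Qed.

Lemma igD x y : ig x -> ig y -> ig (x + y).
Proof.
case=> c -> [d ->]; exists (fun i => c i + d i); rewrite -big_split /=.
by apply: eq_bigr => i _; rewrite mulrDl.
Qed.

Lemma igM c x : ig x -> ig (c * x).
Proof.
case=> d ->; exists (fun i => c * d i); rewrite mulr_sumr.
by apply: eq_bigr => i _; rewrite mulrA.
Qed.

Lemma igN x : ig x -> ig (- x).
Proof. by move=> h; rewrite -mulN1r; apply: igM. Qed.

Lemma igB x y : ig x -> ig y -> ig (x - y).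
Proof. by move=> hx hy; apply: igD => //; apply: igN. Qed.

Lemma iggen i : P i -> ig (g i).
Proof.
move=> Pi; exists (fun j => (j == i)%:R).
rewrite (bigD1 i) //= eqxx mul1r big1 ?addr0 // => j /andP[_ /negbTE ->].
by rewrite mul0r.
Qed.

Lemma igbig (I : Type) (s : seq I) (Q : pred I) (F : I -> R) :
  (forall i, Q i -> ig (F i)) -> ig (\sum_(i <- s | Q i) F i).
Proof. move=> h; apply: big_ind => //; [exact: ig0 | exact: igD]. Qed.

Lemma igmorph (S : comPzRingType) (f : {rmorphism R -> S}) x :
  ig x -> in_ideal_gen (fun i => f (g i)) P (f x).
Proof.
case=> c ->; exists (fun i => f (c i)); rewrite rmorph_sum.
by apply: eq_bigr => i _; rewrite rmorphM.
Qed.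

Lemma igdet p (X Y : 'M[R]_p) :
  (forall i j, ig (X i j - Y i j)) -> ig (\det X - \det Y).
Proof.
move=> hXY; rewrite /determinant -sumrB; apply: igbig => s _.
rewrite -mulrBr; apply: igM.
apply: (big_ind2 (fun x y => ig (x - y))).
- by rewrite subrr; apply: ig0.
- move=> a b c d hab hcd.
  have -> : a * c - b * d = a * (c - d) + (a - b) * d by ring.
  apply: igD; first by apply: igM.
  by rewrite mulrC; apply: igM.
- by move=> i _; apply: hXY.
Qed.

End Ideal.

Lemma igsub (R : comPzRingType) (m : nat) (g : 'I_m -> R) (P : pred 'I_m) m' (h : 'I_m' -> R) P' x :
  (forall i, P i -> in_ideal_gen h P' (g i)) -> in_ideal_gen g P x -> in_ideal_gen h P' x.
Proof.
move=> hg [c ->]; apply: big_ind.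
- exact: ig0.
- exact: igD.
- by move=> i Pi; apply: igM; apply: hg.
Qed.



Lemma Bside (B : comPzRingType) (r : nat) (e : 'I_r -> B) (u v : B)
    (M N : 'M[B]_(1 + r)) :
  (0 < r)%N -> M *m N = 1%:M -> N *m M = 1%:M ->
  ulsubmx M 0 0 = v ->
  (forall j, in_ideal_gen e predT (ursubmx M 0 j)) ->
  ursubmx M *m (\col_i e i) = 0 ->
  in_ideal_gen e predT (u * v - 1) ->
  exists beta : 'M[B]_r,
    in_ideal_gen e predT (\det beta - u) /\
    (forall j, in_ideal_gen (fun i => (((\col_i e i)^T) *m beta) 0 i) predT (e j)).
Proof.
move=> hr hMN hNM hv hur hsum huv.
set E := \col_i e i.
set Q := drsubmx M; set Z := drsubmx N.
have dMN : \det M * \det N = 1 by rewrite -det_mulmx hMN det1.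
have eE : E = Z *m (Q *m E).
  have h1 : M *m col_mx 0 E = col_mx 0 (Q *m E).
    by rewrite -[M]submxK mul_block_col !mulmx0 !add0r hsum.
  have h2 : col_mx 0 E = N *m col_mx 0 (Q *m E) by rewrite -h1 mulmxA hNM mul1mx.
  rewrite -[N]submxK mul_block_col !mulmx0 !add0r in h2.
  by case/eq_col_mx: h2 => _.
pose d := \row_(i < r) (if i == 0 :> nat then \det N else 1).
pose d' := fun i : 'I_r => (if i == 0 :> nat then \det M else 1).
exists (Q^T *m diag_mx d); split.
  have hdet : in_ideal_gen e predT (\det M - v * \det Q).
    have -> : v * \det Q = \det (block_mx (ulsubmx M) 0 (dlsubmx M) Q).
      by rewrite det_lblock det_mx11 hv.
    rewrite -{1}[M]submxK; apply: igdet => i j.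
    rewrite -[i]splitK -[j]splitK.
    case: (split i) => i'; case: (split j) => j' /=;
      rewrite ?block_mxEul ?block_mxEur ?block_mxEdl ?block_mxEdr ?subrr ?mxE ?subr0;
      try exact: ig0.
    by rewrite (ord1 i'); have := hur j'; rewrite !mxE.
  rewrite det_mulmx det_tr det_diag (bigD1 (Ordinal hr)) //= mxE eqxx.
  rewrite big1 ?mulr1; last first.
    move=> i hi; rewrite mxE ifF //; apply: contraNF hi => /eqP h.
    by apply/eqP/val_inj.
  set dq := \det Q; set del := \det M; set eta := \det N.
  have -> : dq * eta - u = - (eta * dq) * (u * v - 1) - (eta * u) * (del - v * dq)
      + u * (del * eta - 1) by ring.
  rewrite dMN subrr mulr0 addr0.
  by apply: igB; apply: igM.
move=> j.
have hb : forall i, (Q *m E) i 0 = (E^T *m (Q^T *m diag_mx d)) 0 i * d' i.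
  move=> i; rewrite mulmxA -trmx_mul mul_mx_diag !mxE /d'.
  case: (i == 0 :> nat); last by rewrite !mulr1.
  by rewrite -mulrA [_ * \det M]mulrC dMN mulr1.
have -> : e j = (Z *m (Q *m E)) j 0 by rewrite -eE mxE.
rewrite mxE; apply: igbig => i _; apply: igM.
by rewrite hb mulrC; apply: igM; apply: iggen.
Qed.


Lemma entry1E (A : comPzRingType) (n : nat) (a : 'rV[A]_n) m (h : (m.-1 < n)%N) :
  entry1 a m = a 0 (Ordinal h).
Proof. by rewrite /entry1 insubT. Qed.

Lemma altsum (R : comPzRingType) (E : nat -> R) m :
  \sum_(0 <= j < m.*2) (if odd j.+1 then E j.+2 else - E j) * E j.+1 = 0.
Proof.
elim: m => [|m IH]; first by rewrite big_nil.
rewrite doubleS !big_nat_recr //= IH add0r odd_double /=.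
by rewrite mulNr mulrC subrr.
Qed.

Lemma pull (A B : comPzRingType) (pi : {rmorphism A -> B})
    (hs : forall y, exists x, pi x = y) m (g : 'I_m -> A) m' (h : 'I_m' -> A) P x :
  (forall i, in_ideal_gen h P (g i)) -> (forall y, pi y = 0 -> in_ideal_gen h P y) ->
  in_ideal_gen (fun i => pi (g i)) predT (pi x) -> in_ideal_gen h P x.
Proof.
move=> hg hk [c hc].
have hs' : forall y, exists x, pi x == y by move=> y; case: (hs y) => z <-; exists z.
pose c' i := xchoose (hs' (c i)).
pose s := \sum_(i < m | predT i) c' i * g i.
have hs0 : pi (x - s) = 0.
  rewrite rmorphB rmorph_sum hc; apply/eqP; rewrite subr_eq0; apply/eqP.
  by apply: eq_bigr => i _; rewrite rmorphM /c' (eqP (xchooseP (hs' (c i)))).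
have -> : x = (x - s) + s by rewrite subrK.
apply: igD; first exact: hk.
by apply: igbig => i _; apply: igM.
Qed.


Lemma main_rk (A : comPzRingType) (r k : nat) (a : 'rV[A]_(r + k)) (u v : A)
    (B : comPzRingType) (pi : {rmorphism A -> B}) :
  in_ideal_gen (fun i => a 0 i) predT (u * v - 1) ->
  ~~ odd r -> (2 <= r)%N ->
  (forall y : B, exists x : A, pi x = y) ->
  (forall x : A, pi x = 0 <-> in_ideal_gen (fun i => a 0 i) (fun i => (r <= i)%N) x) ->
  completable (map_mx pi (special_row r v a)) ->
  exists alpha : 'M[A]_(r + k),
    in_ideal_gen (fun i => a 0 i) predT (\det alpha - u) /\
    (forall x : A, in_ideal_gen (fun i => a 0 i) predT x <->
                   in_ideal_gen (fun i => (a *m alpha) 0 i) predT x).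
Proof.
move=> huv hodd hr2 hsurj hker [M [N [hrow hMN hNM]]].
have hr : (0 < r)%N by apply: leq_trans hr2.
pose e := fun j : 'I_r => pi (a 0 (lshift k j)).
pose E := fun m => pi (entry1 a m).
have eE : forall j : 'I_r, e j = E j.+1.
  move=> j; rewrite /E (@entry1E _ _ a j.+1 (ltn_addr k (ltn_ord j))) /e.
  by congr (pi (a 0 _)); apply: val_inj.
have hEin : forall m, (0 < m)%N -> (m <= r)%N -> in_ideal_gen e predT (E m).
  move=> m hm0 hmr.
  have hm : (m.-1 < r)%N by rewrite prednK.
  have -> : E m = e (Ordinal hm) by rewrite eE /= prednK.
  exact: iggen.
have hM0 : forall j, M 0 j = pi (special_row r v a 0 j).
  by move=> j; have := congr1 (fun X : 'rV[B]_r.+1 => X 0 j) hrow; rewrite !mxE.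
have h00 : lshift r (0 : 'I_1) = (0 : 'I_r.+1) by apply: val_inj.
have hM0' : forall i j : 'I_r.+1, i = 0 :> nat -> M i j = pi (special_row r v a 0 j).
  by move=> i j hi; have -> : i = 0 by apply: val_inj.
have hur : forall j : 'I_r, ursubmx (M : 'M[B]_(1 + r)) 0 j =
    (if odd j.+1 then E j.+2 else - E j).
  move=> j; rewrite !mxE hM0' // mxE /=.
  by case: ifP => _ //; rewrite rmorphN.
have kerI : forall y, pi y = 0 -> in_ideal_gen (fun i => a 0 i) predT y.
  move=> y /hker; apply: igsub => i _; exact: iggen.
have [beta [hdet hgen]] : exists beta : 'M[B]_r,
    in_ideal_gen e predT (\det beta - pi u) /\
    (forall j, in_ideal_gen (fun i => (((\col_i e i)^T) *m beta) 0 i) predT (e j)).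
  apply: (@Bside B r e (pi u) (pi v) M N hr hMN hNM).
  - by rewrite !mxE hM0' // mxE.
  - move=> j; rewrite hur; case: ifP => hj.
      apply: hEin => //.
      have : (j.+1 < r)%N.
        rewrite ltn_neqAle ltn_ord andbT; apply/eqP => hjr.
        by rewrite -hjr hj in hodd.
      by [].
    apply: igN; apply: hEin; last by apply: ltnW.
    by case: (nat_of_ord j) hj.
  - apply/matrixP => i j; rewrite (ord1 i) (ord1 j) !mxE.
    rewrite (eq_bigr (fun l : 'I_r => (if odd l.+1 then E l.+2 else - E l) * E l.+1)); last first.
      by move=> l _; rewrite hur mxE eE.
    rewrite -(big_mkord xpredT (fun l => (if odd l.+1 then E l.+2 else - E l) * E l.+1)).
    have hr' : (r./2).*2 = r by rewrite -[RHS]odd_double_half (negbTE hodd).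
    by have := @altsum _ E r./2; rewrite hr'.
  - have := @igmorph _ _ _ _ _ pi _ huv; rewrite rmorphB rmorphM rmorph1.
    apply: igsub => i _; rewrite -[i]splitK; case: (split i) => i' /=.
      exact: iggen.
    have -> : pi (a 0 (rshift r i')) = 0.
      by apply/hker; apply: iggen; rewrite /= leq_addr.
    exact: ig0.
have hs' : forall y, exists x, pi x == y by move=> y; case: (hsurj y) => z <-; exists z.
pose lf y := xchoose (hs' y).
have hlf : forall y, pi (lf y) = y by move=> y; exact: (eqP (xchooseP (hs' y))).
pose betaA := map_mx lf beta.
have hbeta : map_mx pi betaA = beta by apply/matrixP => i j; rewrite !mxE hlf.
exists (block_mx betaA 0 0 1%:M); split.
  rewrite det_ublock det1 mulr1.
  apply: (@pull A B pi hsurj r (fun i => a 0 (lshift k i))).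
  - by move=> i; apply: iggen.
  - exact: kerI.
  - by rewrite rmorphB -det_map_mx hbeta.
have hb : a *m block_mx betaA 0 0 1%:M = row_mx (lsubmx a *m betaA) (rsubmx a).
  by rewrite -{1}[a]hsubmxK mul_row_block !mulmx0 addr0 add0r mulmx1.
move=> x; split.
  apply: igsub => i _; rewrite hb.
  have hR : forall i' : 'I_k, in_ideal_gen
      (fun i => (row_mx (lsubmx a *m betaA) (rsubmx a)) 0 i) predT (a 0 (rshift r i')).
    move=> i'.
    have -> : a 0 (rshift r i') = (row_mx (lsubmx a *m betaA) (rsubmx a)) 0 (rshift r i').
      by rewrite row_mxEr mxE.
    exact: iggen.
  rewrite -[i]splitK; case: (split i) => i' /=; last exact: hR.
  apply: (@pull A B pi hsurj r
            (fun l => (row_mx (lsubmx a *m betaA) (rsubmx a)) 0 (lshift k l))).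
  - by move=> l; apply: iggen.
  - move=> y /hker; apply: igsub => j hj.
    have hlt : (j - r < k)%N by rewrite ltn_subLR // ltn_ord.
    have -> : j = rshift r (Ordinal hlt) by apply: val_inj; rewrite /= subnKC.
    exact: hR.
  - have hrow' : map_mx pi (lsubmx a) = (\col_i e i)^T.
      by apply/matrixP => i0 j0; rewrite (ord1 i0) !mxE.
    apply: igsub (hgen i') => l _.
    have -> : ((\col_i e i)^T *m beta) 0 l =
        pi ((row_mx (lsubmx a *m betaA) (rsubmx a)) 0 (lshift k l)).
      by rewrite row_mxEl -hrow' -hbeta -map_mxM mxE.
    exact: iggen.
apply: igsub => i _; rewrite mxE.
exists (fun j => block_mx betaA 0 0 1%:M j i).
by apply: eq_bigr => j _; rewrite mulrC.
Qed.

Theorem proposition7p4 (A : comPzRingType) (n : nat) (a : 'rV[A]_n) (u v : A)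
    (r : nat)
    (B : comPzRingType) (pi : {rmorphism A -> B}) :
  noetherian A ->
  (* u is a unit modulo I = <a_1,...,a_n> *)
  (exists w : A, in_ideal_gen (fun i => a 0 i) predT (u * w - 1)) ->
  in_ideal_gen (fun i => a 0 i) predT (u * v - 1) ->
  ~~ odd r -> (2 <= r)%N -> (r <= n)%N ->
  (* B = A / <a_{r+1},...,a_n>, pi the canonical surjection *)
  (forall y : B, exists x : A, pi x = y) ->
  (forall x : A, pi x = 0 <-> in_ideal_gen (fun i => a 0 i) (fun i => (r <= i)%N) x) ->
  completable (map_mx pi (special_row r v a)) ->
  exists alpha : 'M[A]_n,
    in_ideal_gen (fun i => a 0 i) predT (\det alpha - u) /\
    (forall x : A, in_ideal_gen (fun i => a 0 i) predT x <->
                   in_ideal_gen (fun i => (a *m alpha) 0 i) predT x).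

Proof.
move=> _ _ huv hodd hr2 hrn hsurj hker hcomp.
pose k := (n - r)%N.
have e : n = (r + k)%N by rewrite /k subnKC.
clearbody k; subst n.
exact: main_rk huv hodd hr2 hsurj hker hcomp.
Qed.
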